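(* Assume PONO holds. Let $Q$ be a finite nonempty set of tables, $\mathbf{W}\in\mathbb{R}_{\ge0}^{\mathbb{O}}$ a weight vector and $\alpha_U\ge1$. Run RTA with internal precision $\alpha_i=\alpha_U^{1/|Q|}$ and let $p$ be a plan in $\mathcal{P}^Q$ minimizing $C_{\mathbf{W}}(\mathbf{c}(p))$. Then $C_{\mathbf{W}}(\mathbf{c}(p))\le\alpha_U\cdot\min_{p'\in\mathcal{A}(Q)}C_{\mathbf{W}}(\mathbf{c}(p'))$, i.e. $p$ is an $\alpha_U$-approximate solution of the weighted MOQO instance $\langle Q,\mathbf{W}\rangle$.
   Context: Setting as follows. A finite set $\mathbb{O}$ of $l\ge1$ objectives, a finite set $\mathbb{J}$ of join operators; each table $t$ has a finite nonempty set $\mathcal{A}(\{t\})$ of scan plans; for $|q|\ge2$, $\mathcal{A}(q)$ is the set of plans $\mathrm{Combine}(j,p_1,p_2)$ with $q=q_1\dot\cup q_2$ nonempty parts, $j\in\mathbb{J}$, $p_i\in\mathcal{A}(q_i)$. Each plan has cost vector $\mathbf{c}(p)\in\mathbb{R}_{\ge0}^{\mathbb{O}}$; $C_{\mathbf{W}}(\mathbf{c})=\sum_{o}\mathbf{c}^o\mathbf{W}^o$. $\mathbf{c}_1\preceq\mathbf{c}_2$ iff $\mathbf{c}_1^o\le\mathbf{c}_2^o$ for all $o$; $\mathbf{c}_1\preceq_\alpha\mathbf{c}_2$ iff $\mathbf{c}_1^o\le\alpha\mathbf{c}_2^o$ for all $o$. PONO: for all $\alpha\ge1$, $j$, and plans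 with $\mathbf{c}(p_L^* )\preceq_\alpha\mathbf{c}(p_L)$, $\mathbf{c}(p_R^* )\preceq_\alpha\mathbf{c}(p_R)$ ($p_L,p_L^*$ for the same table set, likewise $p_R,p_R^*$), $\mathbf{c}(\mathrm{Combine}(j,p_L^*,p_R^* ))\preceq_\alpha\mathbf{c}(\mathrm{Combine}(j,p_L,p_R))$. $\mathrm{Prune}(\mathcal{P},p_N,\alpha_i)$: if no $p\in\mathcal{P}$ has $\mathbf{c}(p)\preceq_{\alpha_i}\mathbf{c}(p_N)$, delete all $p\in\mathcal{P}$ with $\mathbf{c}(p_N)\preceq\mathbf{c}(p)$ and insert $p_N$; else do nothing. RTA: for each $t\in Q$, $\mathcal{P}^{\{t\}}$ starts empty and $\mathrm{Prune}$ is called with every scan plan of $t$; then for $k=2,\dots,|Q|$ and each $q\subseteq Q$ with $|q|=k$, $\mathcal{P}^q$ starts empty and $\mathrm{Prune}(\mathcal{P}^q,\mathrm{Combine}(j,p_1,p_2),\alpha_i)$ is called for all splits $q=q_1\dot\cup q_2$ into nonempty parts, all $p_1\in\mathcal{P}^{q_1}$, $p_2\in\mathcal{P}^{q_2}$, $j\in\mathbb{J}$. *)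

(* Defs.v *)
From Stdlib Require Import Reals Permutation.
From mathcomp Require Import all_boot.

Set Implicit Arguments.
Unset Strict Implicit.
Unset Printing Implicit Defensive.

Inductive plan (T J Sc : Type) : Type :=
  | Scan : T -> Sc -> plan T J Sc
  | Combine : J -> plan T J Sc -> plan T J Sc -> plan T J Sc.

Section Plans.
Variables (T J Sc O : finType).
Variable scans : T -> {set Sc}.     (* A({t}) = [seq Scan t s | s in scans t] *)

Fixpoint ptables (p : plan T J Sc) : {set T} :=
  match p with
  | Scan t _ => [set t]
  | Combine _ p1 p2 => ptables p1 :|: ptables p2
  end.

Fixpoint wf (p : plan T J Sc) : Prop :=
  match p with
  | Scan t s => s \in scans t
  | Combine _ p1 p2 => wf p1 /\ wf p2 /\ [disjoint ptables p1 & ptables p2]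
  end.

Definition in_A (q : {set T}) (p : plan T J Sc) : Prop := wf p /\ ptables p = q.

Definition Rleb (x y : R) : bool := if Rle_dec x y then true else false.

Definition approx_dom (alpha : R) (c1 c2 : O -> R) : Prop :=
  forall o, Rle (c1 o) (Rmult alpha (c2 o)).
Definition approx_domb (alpha : R) (c1 c2 : O -> R) : bool :=
  [forall o, Rleb (c1 o) (Rmult alpha (c2 o))].
Definition domb (c1 c2 : O -> R) : bool := [forall o, Rleb (c1 o) (c2 o)].

Definition CW (W : O -> R) (c : O -> R) : R := foldr (fun o acc => Rplus (Rmult (c o) (W o)) acc) R0 (enum O).

Variable c : plan T J Sc -> O -> R.

Definition PONO : Prop :=
  forall (alpha : R) (j : J) (pL pLs pR pRs : plan T J Sc),
    Rle 1 alpha ->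
    wf pL -> wf pLs -> wf pR -> wf pRs ->
    ptables pLs = ptables pL -> ptables pRs = ptables pR ->
    [disjoint ptables pL & ptables pR] ->
    approx_dom alpha (c pLs) (c pL) -> approx_dom alpha (c pRs) (c pR) ->
    approx_dom alpha (c (Combine j pLs pRs)) (c (Combine j pL pR)).

Definition prune (alpha : R) (P : seq (plan T J Sc)) (pN : plan T J Sc)
  : seq (plan T J Sc) :=
  if has (fun p => approx_domb alpha (c p) (c pN)) P then P
  else pN :: filter (fun p => ~~ domb (c pN) (c p)) P.

Definition candidates (P : {set T} -> seq (plan T J Sc)) (q : {set T})
  : seq (plan T J Sc) :=
  flatten [seq flatten [seq flatten [seq [seq Combine j p1 p2 | j <- enum J]
                                    | p2 <- P (q :\: q1)]
                       | p1 <- P q1]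
          | q1 <- enum (powerset q) & (q1 != set0) && (q1 != q)].

(* P is a possible outcome of RTA on Q with internal precision alpha
   (Prune calls in an arbitrary order within each table set q). *)
Definition rta_result (alpha : R) (Q : {set T}) (P : {set T} -> seq (plan T J Sc))
  : Prop :=
  (forall t, t \in Q ->
     exists s, Permutation s [seq Scan J t x | x <- enum (scans t)] /\
               P [set t] = foldl (prune alpha) [::] s) /\
  (forall q : {set T}, q \subset Q -> 2 <= #|q| ->
     exists s, Permutation s (candidates P q) /\
               P q = foldl (prune alpha) [::] s).

End Plans.

(* Main.v *)
Require Import Defs.
From Stdlib Require Import Reals Permutation Lra Lia.
From mathcomp Require Import all_boot zify.

Lemma In_memP (U : eqType) (x : U) (s : seq U) : List.In x s <-> x \in s.
Proof.
elim: s => [|a s IH] /=; first by split.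
rewrite in_cons; split.
- by case=> [->|/IH ->]; rewrite ?eqxx ?orbT.
- by case/orP=> [/eqP ->|/IH]; auto.
Qed.

Lemma In_flatten (U : Type) (x : U) (ss : seq (seq U)) :
  List.In x (flatten ss) <-> exists s, List.In s ss /\ List.In x s.
Proof.
elim: ss => [|s ss IH] /=; first by split=> // [[s []]].
rewrite List.in_app_iff IH; split.
- case=> [H|[s' [H1 H2]]]; [exists s|exists s']; tauto.
- case=> s' [[<-|H1] H2]; [left|right; exists s']; tauto.
Qed.

Lemma In_map_seq (U V : Type) (f : U -> V) (y : V) (l : seq U) :
  List.In y (map f l) <-> exists x, List.In x l /\ y = f x.
Proof.
elim: l => [|a l IH] /=; first by split=> // [[x []]].
rewrite IH; split.
- case=> [<-|[x [H1 H2]]]; [exists a|exists x]; tauto.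
- case=> x [[<-|H1] H2]; [left|right; exists x]; auto.
Qed.

Lemma In_filter_seq (U : Type) (f : pred U) (y : U) (l : seq U) :
  List.In y (filter f l) <-> List.In y l /\ f y.
Proof.
elim: l => [|a l IH] /=; first by split=> // [[]].
case fa: (f a) => /=; rewrite ?IH; split.
- case=> [<-|]; tauto.
- case=> [[<-|]]; tauto.
- tauto.
- case=> [[<-|]]; [by rewrite fa|tauto].
Qed.

Lemma RlebP x y : Rleb x y = true <-> Rle x y.
Proof. rewrite /Rleb; case: Rle_dec => //; split=> //. Qed.

Lemma approx_dombP (O : finType) a (c1 c2 : O -> R) :
  approx_domb a c1 c2 = true <-> approx_dom a c1 c2.
Proof.
rewrite /approx_domb /approx_dom; split.
- by move/forallP=> H o; apply/RlebP/H.
- by move=> H; apply/forallP=> o; apply/RlebP/H.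
Qed.

Lemma dombP (O : finType) (c1 c2 : O -> R) :
  domb c1 c2 = true <-> forall o, Rle (c1 o) (c2 o).
Proof.
rewrite /domb; split.
- by move/forallP=> H o; apply/RlebP/H.
- by move=> H; apply/forallP=> o; apply/RlebP/H.
Qed.

Lemma has_ex (U : Type) (f : pred U) l : has f l -> exists y, List.In y l /\ f y.
Proof.
elim: l => //= a l IH; case/orP=> [H|/IH [y [H1 H2]]]; [exists a|exists y]; tauto.
Qed.

Lemma prune_in (T J Sc O : finType) (c : plan T J Sc -> O -> R) a s acc x :
  List.In x (foldl (prune c a) acc s) -> List.In x acc \/ List.In x s.
Proof.
elim: s acc => [|b s IH] acc /=; first by left.
move/IH=> [|]; last by right; right.
rewrite /prune; case: has; first by left.
case=> [<-|/In_filter_seq [H _]]; [right; left|left]; auto.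
Qed.

Lemma prune_dom (T J Sc O : finType) (c : plan T J Sc -> O -> R) a
  (ha : Rle 1 a) s acc x :
  (exists y, List.In y acc /\ approx_dom a (c y) (c x)) \/
  (List.In x s /\ forall o, Rle 0 (c x o)) ->
  exists y, List.In y (foldl (prune c a) acc s) /\ approx_dom a (c y) (c x).
Proof.
elim: s acc => [|b s IH] acc /=.
  by case=> // [[]].
move=> H; apply: IH.
have P1 : forall z, (exists y, List.In y acc /\ approx_dom a (c y) (c z)) ->
   exists y, List.In y (prune c a acc b) /\ approx_dom a (c y) (c z).
  move=> z [y [Hy Dy]]; rewrite /prune; case: has; first by exists y.
  case Dby: (domb (c b) (c y)).
  - exists b; split; first by left.
    move/dombP: Dby => Dby o; apply: Rle_trans (Dby o) (Dy o).
  - exists y; split=> //; right; apply/In_filter_seq; rewrite Dby; auto.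
case: H => [H|[[Eb|Hs] Hn]]; [left; exact: P1 H| |right; auto].
subst b; left; rewrite /prune.
case Hh: has.
- by case: (has_ex _ _ _ Hh) => y [H1 /approx_dombP H2]; exists y.
- exists x; split; first by left.
  move=> o; have := Hn o; nra.
Qed.
Arguments prune_in {T J Sc O c a s acc x}.

Lemma ptables_gt0 (T J Sc : finType) (p : plan T J Sc) : 0 < #|ptables p|.
Proof.
elim: p => [t s|j p1 IH1 p2 IH2] /=; first by rewrite cards1.
apply: leq_trans IH1 _; apply: subset_leq_card; exact: subsetUl.
Qed.

Lemma cand_out (T J Sc : finType) (P : {set T} -> seq (plan T J Sc)) q x :
  List.In x (candidates P q) ->
  exists (q1 : {set T}) j p1 p2, x = Combine j p1 p2 /\ q1 \subset q /\ q1 != set0 /\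
    q1 != q /\ List.In p1 (P q1) /\ List.In p2 (P (q :\: q1)).
Proof.
rewrite /candidates => /In_flatten [s1 [/In_map_seq [q1 [/In_filter_seq [Hq1 Hc] ->]]]].
move=> /In_flatten [s2 [/In_map_seq [p1 [Hp1 ->]]]].
move=> /In_flatten [s3 [/In_map_seq [p2 [Hp2 ->]]]].
move=> /In_map_seq [j [_ ->]].
case/andP: Hc => H1 H2.
exists q1, j, p1, p2; do !split=> //.
by move/In_memP: Hq1; rewrite mem_enum powersetE.
Qed.

Lemma cand_in (T J Sc : finType) (P : {set T} -> seq (plan T J Sc)) (q q1 : {set T}) (j : J) p1 p2 :
  q1 \subset q -> q1 != set0 -> q1 != q -> List.In p1 (P q1) ->
  List.In p2 (P (q :\: q1)) -> List.In (Combine j p1 p2) (candidates P q).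
Proof.
move=> Hs H1 H2 Hp1 Hp2; rewrite /candidates.
apply/In_flatten; eexists; split; first (apply/In_map_seq; exists q1; split; last reflexivity).
  by apply/In_filter_seq; split; [apply/In_memP; rewrite mem_enum powersetE|rewrite H1 H2].
apply/In_flatten; eexists; split; first (apply/In_map_seq; exists p1; split; [exact Hp1|reflexivity]).
apply/In_flatten; eexists; split; first (apply/In_map_seq; exists p2; split; [exact Hp2|reflexivity]).
apply/In_map_seq; exists j; split=> //; apply/In_memP; by rewrite mem_enum.
Qed.
Arguments cand_out {T J Sc P q x}.

Lemma card_split (T : finType) (q q1 : {set T}) :
  q1 \subset q -> q1 != set0 -> q1 != q ->
  0 < #|q1| < #|q| /\ 0 < #|q :\: q1| < #|q| /\ #|q :\: q1| + #|q1| = #|q|.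
Proof.
move=> Hs H1 H2.
have Hlt : #|q1| < #|q| by apply: proper_card; rewrite properEneq H2 Hs.
have H0 : 0 < #|q1| by rewrite card_gt0.
rewrite cardsD (setIidPr Hs); move: Hlt H0; clear; lia.
Qed.
Arguments card_split {T q q1}.

Lemma sound (T J Sc O : finType) (scans : T -> {set Sc}) (c : plan T J Sc -> O -> R)
  a Q P (run : rta_result scans c a Q P) :
  forall n (q : {set T}), #|q| <= n -> 0 < #|q| -> q \subset Q ->
  forall x, List.In x (P q) -> in_A scans q x.
Proof.
case: run => run1 run2.
elim=> [|n IH] q Hn H0 HQ x Hx; first by move: Hn H0; clear; lia.
case: (ltngtP #|q| 1) => Hq.
- by move: Hq H0; clear; lia.
- have [s [Hperm Hs]] := run2 q HQ Hq.
  rewrite Hs in Hx; case: (prune_in Hx) => // /(Permutation_in _ Hperm).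
  move=> /cand_out [q1 [j [p1 [p2 [-> [Hsub [Hne1 [Hne2 [Hp1 Hp2]]]]]]]]].
  have [C1 [C2 C3]] := card_split Hsub Hne1 Hne2.
  have HQ1 : q1 \subset Q by apply: subset_trans Hsub HQ.
  have HQ2 : q :\: q1 \subset Q by apply: subset_trans (subsetDl _ _) HQ.
  case/andP: C1 => C1a C1b; case/andP: C2 => C2a C2b.
  have [w1 t1] := IH q1 ltac:(lia) C1a HQ1 p1 Hp1.
  have [w2 t2] := IH (q :\: q1) ltac:(lia) C2a HQ2 p2 Hp2.
  split; rewrite /= ?t1 ?t2.
  + do !split=> //; rewrite -setI_eq0; apply/eqP/setP=> z; rewrite !inE.
    by case: (z \in q1); rewrite ?andbF.
  + apply/setP=> z; rewrite !inE; move/subsetP: Hsub => /(_ z).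
    by case: (z \in q1) => //= ->.
- have [t Ht] := cards1P (introT eqP Hq); subst q.
  have Ht : t \in Q by apply: (subsetP HQ); rewrite inE.
  have [s [Hperm Hs]] := run1 t Ht.
  rewrite Hs in Hx; case: (prune_in Hx) => // /(Permutation_in _ Hperm).
  move/In_map_seq=> [y [/In_memP Hy ->]]; split=> //=.
  by rewrite mem_enum in Hy.
Qed.
Arguments sound {T J Sc O scans c a Q P}.

Lemma dom_pow (O : finType) a m n (c1 c2 : O -> R) :
  Rle 1 a -> (m <= n)%N -> (forall o, Rle 0 (c2 o)) ->
  approx_dom (a ^ m) c1 c2 -> approx_dom (a ^ n) c1 c2.
Proof.
move=> Ha /leP Hmn Hn D o; apply: Rle_trans (D o) _.
apply: Rmult_le_compat_r; [exact: Hn|exact: Rle_pow].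
Qed.
Arguments dom_pow {O a m n c1 c2}.

Lemma complete (T J Sc O : finType) (scans : T -> {set Sc}) (c : plan T J Sc -> O -> R)
  (c_nonneg : forall p, wf scans p -> forall o, Rle 0 (c p o))
  (pono : PONO scans c) a (Ha : Rle 1 a) Q P (run : rta_result scans c a Q P) :
  forall p', wf scans p' -> ptables p' \subset Q ->
  exists y, List.In y (P (ptables p')) /\ approx_dom (a ^ #|ptables p'|) (c y) (c p').
Proof.
have snd := sound run.
case: run => run1 run2.
elim=> [t s|j p1 IH1 p2 IH2] /=.
- move=> Hs HQ.
  have Ht : t \in Q by apply: (subsetP HQ); rewrite inE.
  have [s0 [Hperm ->]] := run1 t Ht.
  rewrite cards1 pow_1.
  apply: prune_dom => //; right; split; last exact: c_nonneg.
  apply: (Permutation_in _ (Permutation_sym Hperm)).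
  apply/In_map_seq; exists s; split=> //; apply/In_memP; by rewrite mem_enum.
- move=> [w1 [w2 disj]] HQ.
  set q1 := ptables p1 in disj HQ IH1 *; set q2 := ptables p2 in disj HQ IH2 *.
  have HQ1 : q1 \subset Q by apply: subset_trans HQ; exact: subsetUl.
  have HQ2 : q2 \subset Q by apply: subset_trans HQ; exact: subsetUr.
  have [y1 [Hy1 D1]] := IH1 w1 HQ1.
  have [y2 [Hy2 D2]] := IH2 w2 HQ2.
  have g1 : 0 < #|q1| by exact: ptables_gt0.
  have g2 : 0 < #|q2| by exact: ptables_gt0.
  have [wy1 ty1] := snd #|q1| q1 (leqnn _) g1 HQ1 y1 Hy1.
  have [wy2 ty2] := snd #|q2| q2 (leqnn _) g2 HQ2 y2 Hy2.
  set q := q1 :|: q2 in HQ *.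
  have Hcard : #|q| = #|q1| + #|q2|.
    by rewrite /q cardsU (disjoint_setI0 disj) cards0 subn0.
  have Hsub : q1 \subset q by exact: subsetUl.
  have Hne1 : q1 != set0 by rewrite -card_gt0.
  have Hne2 : q1 != q.
    by apply/eqP=> E; move: Hcard; rewrite -E; move: g2; clear; lia.
  have Hdiff : q :\: q1 = q2.
    apply/setP=> z; rewrite !inE; case Hz: (z \in q1) => //=.
    by rewrite (disjointFr disj Hz).
  have Hc : List.In (Combine j y1 y2) (candidates P q).
    by have := @cand_in _ _ _ P q q1 j y1 y2 Hsub Hne1 Hne2 Hy1; rewrite Hdiff; apply.
  have [s [Hperm Hs]] := run2 q HQ ltac:(lia).
  have Hnn : forall o, Rle 0 (c (Combine j y1 y2) o).
    apply: c_nonneg => /=; do !split=> //; by rewrite ty1 ty2.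
  have [y [Hy Dy]] := @prune_dom _ _ _ _ c a Ha s [::] _ (or_intror (conj (Permutation_in _ (Permutation_sym Hperm) Hc) Hnn)).
  rewrite -Hs in Hy; exists y; split=> //.
  set k := #|q|.-1.
  have Hk : #|q| = k.+1 by rewrite /k; move: Hcard g1; clear; lia.
  have Dc : approx_dom (a ^ k) (c (Combine j y1 y2)) (c (Combine j p1 p2)).
    apply: pono => //; first exact: pow_R1_Rle.
    + apply: (dom_pow Ha _ (c_nonneg _ w1) D1); move: Hk Hcard g2; clear; lia.
    + apply: (dom_pow Ha _ (c_nonneg _ w2) D2); move: Hk Hcard g1; clear; lia.
  rewrite Hk /= => o.
  apply: Rle_trans (Dy o) _; rewrite Rmult_assoc.
  apply: Rmult_le_compat_l; [lra|exact: Dc].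
Qed.

Lemma CW_le (O : finType) (W : O -> R) (W_nonneg : forall o, Rle 0 (W o)) a
  (c1 c2 : O -> R) : approx_dom a c1 c2 -> Rle (CW W c1) (Rmult a (CW W c2)).
Proof.
rewrite /CW => D; elim: (enum O) => [|o l IH] /=; first lra.
have := Rmult_le_compat_r _ _ _ (W_nonneg o) (D o); nra.
Qed.

Theorem corollary1 (T J Sc O : finType) (scans : T -> {set Sc})
    (c : plan T J Sc -> O -> R)
    (scans_nonempty : forall t, scans t != set0)
    (c_nonneg : forall p, wf scans p -> forall o, Rle 0 (c p o))
    (pono : PONO scans c)
    (Q : {set T}) (Q_nonempty : Q != set0)
    (W : O -> R) (W_nonneg : forall o, Rle 0 (W o))
    (alphaU : R) (alphaU_ge1 : Rle 1 alphaU)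
    (P : {set T} -> seq (plan T J Sc))
    (run : rta_result scans c (Rpower alphaU (/ INR #|Q|)) Q P)
    (p : plan T J Sc) (p_in : List.In p (P Q))
    (p_min : forall p', List.In p' (P Q) -> Rle (CW W (c p)) (CW W (c p'))) :
  forall p' : plan T J Sc, in_A scans Q p' ->
    Rle (CW W (c p)) (Rmult alphaU (CW W (c p'))).
Proof.
move=> p' [w tp].
have hpos : Rlt 0 alphaU by lra.
have hn : Rlt 0 (INR #|Q|) by apply: lt_0_INR; apply/ltP; rewrite card_gt0.
have Ha : Rle 1 (Rpower alphaU (/ INR #|Q|)).
  rewrite -(Rpower_O alphaU hpos); apply: Rle_Rpower => //.
  by apply: Rlt_le; apply: Rinv_0_lt_compat.
have Hpow : pow (Rpower alphaU (/ INR #|Q|)) #|Q| = alphaU.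
  rewrite -Rpower_pow; last by apply: Rlt_le_trans Ha; lra.
  rewrite Rpower_mult Rinv_l ?Rpower_1 //; lra.
have [y [Hy Dy]] := @complete _ _ _ _ scans c c_nonneg pono _ Ha _ _ run p' w ltac:(by rewrite tp).
rewrite tp Hpow in Hy Dy.
apply: Rle_trans (p_min _ Hy) _.
exact: CW_le.
Qed.
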